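(* Suppose Assumption (A1) holds, and let $\{x_k\}_{k\in\mathbb N}$, $\{y_k\}_{k\in\mathbb N}$, $\{u_k\}_{k\in\mathbb N}$ be generated by Algorithm NFBHF-M from arbitrary $x_0,u_0\in\mathcal H$. Then for every $x^*\in\operatorname{zer}(A+B+C)$ and every integer $k\ge 1$, $$\Phi_{k+1}(x^* )\le \Phi_k(x^* )-\Big(1-L_{k-1}-L_k-2\gamma_kL_k\mu-\gamma_k^2\mu^2-\frac{\gamma_k\beta}{2}\Big)\|y_k-x_k\|_S^2 .$$
   Context: $\mathcal H$ is a real Hilbert space. $\mathcal P(\mathcal H)$ denotes the set of bounded linear operators $S:\mathcal H\to\mathcal H$ that are self-adjoint and strongly positive ($\langle Sx,x\rangle\ge m\|x\|^2$ for some $m>0$ and all $x$); for such $S$, $S^{-1}\in\mathcal P(\mathcal H)$, $\langle x,y\rangle_S:=\langle Sx,y\rangle$ and $\|x\|_S:=\sqrt{\langle Sx,x\rangle}$. For $S\in\mathcal P(\mathcal H)$, a single-valued $T:\mathcal H\to\mathcal H$ is $L$-Lipschitz continuous w.r.t. $S$ if $\|Tx-Ty\|_{S^{-1}}\le L\|x-y\|_S$ for all $x,y$, and is $\beta^{-1}$-cocoercive w.r.t. $S$ ($\beta>0$) if $\langle Tx-Ty,x-y\rangle\ge \beta^{-1}\|Tx-Ty\|_{S^{-1}}^2$ for all $x,y$. $\operatorname{zer}(A+B+C)=\{x\in\mathcal H: 0\in Ax+Bx+Cx\}$. Assumption (A1): fix $S\in\mathcal P(\mathcal H)$. (i) $A:\mathcal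 H\to2^{\mathcal H}$ is maximally monotone; (ii) $B:\mathcal H\to\mathcal H$ is single-valued, monotone and $\mu$-Lipschitz continuous w.r.t. $S$ ($\mu\ge0$); (iii) $C:\mathcal H\to\mathcal H$ is $\beta^{-1}$-cocoercive w.r.t. $S$ for some $\beta>0$; (iv) $\operatorname{zer}(A+B+C)\neq\emptyset$; (v) there is $\gamma>0$ and, for each $k\in\mathbb N$, a step-size $\gamma_k\ge\gamma$, a constant $L_k\in[0,1)$ and a (possibly nonlinear) operator $M_k:\mathcal H\to\mathcal H$ such that $\gamma_kM_k-S$ is $L_k$-Lipschitz continuous w.r.t. $S$. (Under (v), $M_k$ is maximally monotone and strongly monotone, so $(M_k+A)^{-1}$ is single-valued with full domain.) Algorithm NFBHF-M (nonlinear forward–backward–half forward with momentum): given $x_0,u_0\in\mathcal H$, for $k=0,1,2,\dots$ $$y_k=(M_k+A)^{-1}\big(M_kx_k-(B+C)x_k+\gamma_k^{-1}u_k\big),\quad x_{k+1}=y_k-\gamma_kS^{-1}By_k+\gamma_kS^{-1}Bx_k,\quad u_{k+1}=(\gamma_kM_k-S)y_k-(\gamma_kM_k-S)x_k.$$ For $x\in\mathcal H$ and $k\ge1$, $\Phi_k(x):=\|x_k-x\|_S^2+2\langle u_k,x_k-x\rangle+L_{k-1}\|y_{k-1}-x_{k-1}\|_S^2$. *)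

(* Defs.v *)
From HB Require Import structures.
From mathcomp Require Import all_boot all_order all_algebra.
From mathcomp Require Import all_classical all_reals all_analysis.
Set Implicit Arguments. Unset Strict Implicit. Unset Printing Implicit Defensive.
Import Order.TTheory GRing.Theory Num.Theory.
Import numFieldNormedType.Exports.
Local Open Scope ring_scope.
Local Open Scope classical_set_scope.

Record inner_product (R : realType) (H : completeNormedModType R) := InnerProduct {
  ip : H -> H -> R;
  ipDl : forall x y z, ip (x + y) z = ip x z + ip y z;
  ipZl : forall (a : R) x y, ip (a *: x) y = a * ip x y;
  ipC : forall x y, ip x y = ip y x;
  ip_norm : forall x, ip x x = `|x| ^+ 2
}.

Section Defs.
Variables (R : realType) (H : completeNormedModType R) (I : inner_product H).
Local Notation "<< x , y >>" := (ip I x y).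

Definition bounded_linear (S : H -> H) :=
  (forall (a : R) x y, S (a *: x + y) = a *: S x + S y) /\
  exists c : R, forall x, `|S x| <= c * `|x|.

Definition self_adjoint (S : H -> H) := forall x y, << S x, y >> = << x, S y >>.

Definition strongly_positive (S : H -> H) :=
  exists m : R, 0 < m /\ forall x, m * `|x| ^+ 2 <= << S x, x >>.

Definition in_P (S : H -> H) :=
  bounded_linear S /\ self_adjoint S /\ strongly_positive S.

Definition normS (S : H -> H) (x : H) : R := Num.sqrt << S x, x >>.

Definition lipschitz_wrt (S Sinv : H -> H) (L : R) (T : H -> H) :=
  forall x y, normS Sinv (T x - T y) <= L * normS S (x - y).

Definition cocoercive_wrt (Sinv : H -> H) (beta : R) (T : H -> H) :=
  forall x y, beta^-1 * normS Sinv (T x - T y) ^+ 2 <= << T x - T y, x - y >>.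

Definition monotone_op (A : H -> set H) :=
  forall x y u v, A x u -> A y v -> 0 <= << u - v, x - y >>.

Definition maximally_monotone (A : H -> set H) :=
  monotone_op A /\
  forall x u, (forall y v, A y v -> 0 <= << u - v, x - y >>) -> A x u.

Definition monotone_fun (B : H -> H) :=
  forall x y, 0 <= << B x - B y, x - y >>.

Definition zer3 (A : H -> set H) (B C : H -> H) : set H :=
  [set x | A x (- (B x + C x))].

(* set-valued inverse (M + A)^{-1} z = [set y | z \in M y + A y] *)
Definition inv_sum (M : H -> H) (A : H -> set H) (z : H) : set H :=
  [set y | A y (z - M y)].

End Defs.

(* Main.v *)
Require Import Defs.
From HB Require Import structures.
From mathcomp Require Import all_boot all_order all_algebra.
From mathcomp Require Import all_classical all_reals all_analysis.
From mathcomp Require Import ring lra.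
Set Implicit Arguments. Unset Strict Implicit.
Import Order.TTheory GRing.Theory Num.Theory.
Import numFieldNormedType.Exports.
Local Open Scope ring_scope.
Local Open Scope classical_set_scope.

Lemma ipDr (R : realType) (H : completeNormedModType R) (I : inner_product H) x y z :
  ip I z (x + y) = ip I z x + ip I z y.
Proof. by rewrite ipC ipDl ![ip I _ z]ipC. Qed.
Lemma ipZr (R : realType) (H : completeNormedModType R) (I : inner_product H) (a : R) x y :
  ip I y (a *: x) = a * ip I y x.
Proof. by rewrite ipC ipZl ipC. Qed.
Lemma ipNl (R : realType) (H : completeNormedModType R) (I : inner_product H) x y :
  ip I (- x) y = - ip I x y.
Proof. by rewrite -scaleN1r ipZl mulN1r. Qed.
Lemma ipNr (R : realType) (H : completeNormedModType R) (I : inner_product H) x y :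
  ip I y (- x) = - ip I y x.
Proof. by rewrite ipC ipNl ipC. Qed.

Definition linf (R : realType) (H : completeNormedModType R) (S : H -> H) :=
  forall (a : R) x y, S (a *: x + y) = a *: S x + S y.

Lemma lin0 (R : realType) (H : completeNormedModType R) (S : H -> H) :
  linf S -> S 0 = 0.
Proof. move=> hS; have := hS 1 0 0; rewrite !scale1r addr0 => /eqP.
by rewrite -subr_eq subrr eq_sym => /eqP. Qed.
Lemma linD (R : realType) (H : completeNormedModType R) (S : H -> H) :
  linf S -> forall x y, S (x + y) = S x + S y.
Proof. by move=> hS x y; rewrite -[x]scale1r hS !scale1r. Qed.
Lemma linZ (R : realType) (H : completeNormedModType R) (S : H -> H) :
  linf S -> forall (a : R) x, S (a *: x) = a *: S x.
Proof. by move=> hS a x; rewrite -[a *: x]addr0 hS lin0 // addr0. Qed.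
Lemma linN (R : realType) (H : completeNormedModType R) (S : H -> H) :
  linf S -> forall x, S (- x) = - S x.
Proof. by move=> hS x; rewrite -scaleN1r linZ // scaleN1r. Qed.
Lemma lin_inv (R : realType) (H : completeNormedModType R) (S Sinv : H -> H) :
  linf S -> (forall z, S (Sinv z) = z) -> (forall z, Sinv (S z) = z) -> linf Sinv.
Proof.
move=> hS h1 h2 a x y.
by rewrite -{1}(h1 x) -{1}(h1 y) -hS h2.
Qed.
Lemma ip0l (R : realType) (H : completeNormedModType R) (I : inner_product H) y :
  ip I 0 y = 0.
Proof. by rewrite -(scale0r (0 : H)) ipZl mul0r. Qed.
Lemma ip0r (R : realType) (H : completeNormedModType R) (I : inner_product H) y :
  ip I y 0 = 0.
Proof. by rewrite ipC ip0l. Qed.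

Lemma pos_ge0 (R : realType) (H : completeNormedModType R) (I : inner_product H) S :
  strongly_positive I S -> forall p, 0 <= ip I (S p) p.
Proof.
case=> m [m0 hm] p; apply: le_trans (hm p); apply: mulr_ge0; first exact: ltW.
exact: exprn_ge0.
Qed.

Lemma pos_eq0 (R : realType) (H : completeNormedModType R) (I : inner_product H) S :
  strongly_positive I S -> forall p, ip I (S p) p <= 0 -> p = 0.
Proof.
case=> m [m0 hm] p hp.
have h1 : m * `|p| ^+ 2 <= 0 by apply: le_trans (hm p) hp.
have h2 : `|p| ^+ 2 <= 0.
  by rewrite -(pmulr_rle0 _ m0).
have h3 : `|p| ^+ 2 = 0 by apply/eqP; rewrite eq_le h2 exprn_ge0.
by move/eqP: h3; rewrite expf_eq0 /= normr_eq0 => /eqP.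
Qed.

Lemma ipS_sym (R : realType) (H : completeNormedModType R) (I : inner_product H) S :
  self_adjoint I S -> forall p q, ip I (S q) p = ip I (S p) q.
Proof. by move=> hsa p q; rewrite hsa ipC. Qed.

Lemma cs (R : realType) (H : completeNormedModType R) (I : inner_product H) S :
  linf S -> self_adjoint I S -> strongly_positive I S ->
  forall p q (al c : R), 0 <= al -> 0 <= c ->
  ip I (S p) p <= al ^+ 2 -> ip I (S q) q <= c ^+ 2 -> ip I (S p) q <= al * c.
Proof.
move=> hS hsa hpos p q al c al0 c0 hp hq.
have [ae|anz] := eqVneq al 0.
  have -> : p = 0.
    by apply: (pos_eq0 hpos); move: hp; rewrite ae expr2 mulr0.
  by rewrite lin0 // ip0l ae mul0r.
have [ce|cnz] := eqVneq c 0.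
  have -> : q = 0.
    by apply: (pos_eq0 hpos); move: hq; rewrite ce expr2 mulr0.
  by rewrite ip0r ce mulr0.
have hal : 0 < al by rewrite lt_neqAle eq_sym anz.
have hc : 0 < c by rewrite lt_neqAle eq_sym cnz.
have h := pos_ge0 hpos (c *: p - al *: q).
rewrite !(linD hS, linN hS, linZ hS) !(ipDl, ipDr, ipNl, ipNr, ipZl, ipZr) in h.
rewrite (ipS_sym hsa p q) in h.
have hp' : c ^+ 2 * ip I (S p) p <= c ^+ 2 * al ^+ 2 by rewrite ler_wpM2l // exprn_ge0.
have hq' : al ^+ 2 * ip I (S q) q <= al ^+ 2 * c ^+ 2 by rewrite ler_wpM2l // exprn_ge0.
have hac : 0 < al * c by apply: mulr_gt0.
nra.
Qed.

Lemma nS2 (R : realType) (H : completeNormedModType R) (I : inner_product H) S :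
  strongly_positive I S -> forall v, normS I S v ^+ 2 = ip I (S v) v.
Proof. by move=> hpos v; rewrite /normS sqr_sqrtr // pos_ge0. Qed.

Lemma ipSi (R : realType) (H : completeNormedModType R) (I : inner_product H) S Sinv :
  (forall z, S (Sinv z) = z) -> forall w, ip I (Sinv w) w = ip I (S (Sinv w)) (Sinv w).
Proof. by move=> SSi w; rewrite ipC SSi. Qed.

Lemma nSi2 (R : realType) (H : completeNormedModType R) (I : inner_product H) S Sinv :
  strongly_positive I S -> (forall z, S (Sinv z) = z) ->
  forall w, normS I Sinv w ^+ 2 = ip I w (Sinv w).
Proof.
move=> hpos SSi w; rewrite /normS sqr_sqrtr (ipSi I SSi) ?pos_ge0 //.
by rewrite SSi.
Qed.

Lemma nS_ge0 (R : realType) (H : completeNormedModType R) (I : inner_product H) S v :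
  0 <= normS I S v.
Proof. exact: sqrtr_ge0. Qed.

Lemma nS_Sinv (R : realType) (H : completeNormedModType R) (I : inner_product H) S Sinv :
  (forall z, S (Sinv z) = z) -> forall w, normS I S (Sinv w) = normS I Sinv w.
Proof. by move=> SSi w; rewrite /normS (ipSi I SSi). Qed.

Lemma csD (R : realType) (H : completeNormedModType R) (I : inner_product H) S Sinv :
  linf S -> self_adjoint I S -> strongly_positive I S ->
  (forall z, S (Sinv z) = z) ->
  forall w v (al c : R), 0 <= al -> 0 <= c ->
  normS I Sinv w <= al -> normS I S v <= c -> ip I w v <= al * c.
Proof.
move=> hS hsa hpos SSi w v al c al0 c0 hw hv.
rewrite -{1}(SSi w); apply: cs => //.
  rewrite -(ipSi I SSi) ipC -(nSi2 hpos SSi).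
  have := nS_ge0 I Sinv w; nra.
rewrite -(nS2 hpos); have := nS_ge0 I S v; nra.
Qed.

Lemma csDn (R : realType) (H : completeNormedModType R) (I : inner_product H) S Sinv :
  linf S -> self_adjoint I S -> strongly_positive I S ->
  (forall z, S (Sinv z) = z) -> (forall z, Sinv (S z) = z) ->
  forall w v (al c : R), 0 <= al -> 0 <= c ->
  normS I Sinv w <= al -> normS I S v <= c -> - ip I w v <= al * c.
Proof.
move=> hS hsa hpos SSi SiS w v al c al0 c0 hw hv.
rewrite -ipNl; apply: (csD hS hsa hpos SSi) => //.
by rewrite /normS (linN (lin_inv hS SSi SiS)) ipNl ipNr opprK.
Qed.

Unset Implicit Arguments.
Set Strict Implicit.

Lemma young2 (R : realType) (g b t s : R) : 0 < g -> 0 < b ->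
  2 * g * t * s - 2 * g * (b^-1 * t ^+ 2) <= g * b / 2 * s ^+ 2.
Proof.
move=> g0 b0.
have h : 0 <= g * b^-1 * (2 * t - b * s) ^+ 2 / 2.
  apply: mulr_ge0; last by rewrite invr_ge0.
  apply: mulr_ge0; last exact: sqr_ge0.
  by apply: mulr_ge0; [exact: ltW | rewrite invr_ge0 ltW].
have bnz : b != 0 by rewrite gt_eqF.
have e : g * b / 2 * s ^+ 2 - (2 * g * t * s - 2 * g * (b^-1 * t ^+ 2))
   = g * b^-1 * (2 * t - b * s) ^+ 2 / 2 by field.
lra.
Qed.

Theorem lemma3p1 (R : realType) (H : completeNormedModType R) (I : inner_product H)
  (S Sinv : H -> H)
  (A : H -> set H) (B C : H -> H) (mu beta gamma : R)
  (gam L : nat -> R) (M : nat -> H -> H)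
  (x y u : nat -> H) (xs : H) :
  (* S in P(H), Sinv its inverse *)
  in_P I S ->
  (forall z, S (Sinv z) = z) -> (forall z, Sinv (S z) = z) ->
  (* (A1)(i) *)
  maximally_monotone I A ->
  (* (A1)(ii) *)
  monotone_fun I B -> 0 <= mu -> lipschitz_wrt I S Sinv mu B ->
  (* (A1)(iii) *)
  0 < beta -> cocoercive_wrt I Sinv beta C ->
  (* (A1)(iv) *)
  (exists z, zer3 A B C z) ->
  (* (A1)(v) *)
  0 < gamma ->
  (forall k, gamma <= gam k) ->
  (forall k, 0 <= L k < 1) ->
  (forall k, lipschitz_wrt I S Sinv (L k) (fun z => gam k *: M k z - S z)) ->
  (* Algorithm NFBHF-M (x 0, u 0 arbitrary) *)
  (forall k, inv_sum (M k) A
       (M k (x k) - (B (x k) + C (x k)) + (gam k)^-1 *: u k) (y k)) ->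
  (forall k, x k.+1 = y k - gam k *: Sinv (B (y k)) + gam k *: Sinv (B (x k))) ->
  (forall k, u k.+1 = (gam k *: M k (y k) - S (y k)) - (gam k *: M k (x k) - S (x k))) ->
  zer3 A B C xs ->
  let Phi := fun k : nat =>
    normS I S (x k - xs) ^+ 2 + 2 * ip I (u k) (x k - xs)
    + L k.-1 * normS I S (y k.-1 - x k.-1) ^+ 2 in
  forall k : nat, (1 <= k)%N ->
    Phi k.+1 <= Phi k
      - (1 - L k.-1 - L k - 2 * gam k * L k * mu - gam k ^+ 2 * mu ^+ 2
         - gam k * beta / 2) * normS I S (y k - x k) ^+ 2.
Proof.
move=> hP SSi SiS [hAm _] hBm hmu hBL hbeta hCc _ hgam hgk hLk hML hy hx hu hxs Phi k hk.
case: hP => [[hS _] [hsa hpos]].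
case: k hk => [//|k] _.
rewrite /Phi /=.
have g0 : 0 < gam k.+1 := lt_le_trans hgam (hgk _).
have gnz : gam k.+1 != 0 by rewrite gt_eqF.
have hSi := lin_inv hS SSi SiS.
have [L0 _] := andP (hLk k).
have [L10 _] := andP (hLk k.+1).
have hxk : x k.+2 - xs = y k.+1 - xs - gam k.+1 *: Sinv (B (y k.+1) - B (x k.+1)).
  rewrite hx (linD hSi) (linN hSi) scalerDr scalerN opprD opprK.
  by rewrite addrA [LHS]addrAC [in LHS](addrAC (y k.+1)).
set P := normS I S (y k - x k).
set s := normS I S (y k.+1 - x k.+1).
have s0 : 0 <= s := nS_ge0 _ _ _.
have P0 : 0 <= P := nS_ge0 _ _ _.
have hP2 : P ^+ 2 = ip I (S (y k - x k)) (y k - x k) by rewrite /P nS2.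
have hs : s ^+ 2 = ip I (S (y k.+1 - x k.+1)) (y k.+1 - x k.+1) by rewrite /s nS2.
rewrite (nS2 hpos (x k.+2 - xs)) (nS2 hpos (x k.+1 - xs)) hxk.
set E := Sinv (B (y k.+1) - B (x k.+1)).
have hE : forall v, ip I (S v) E = ip I (B (y k.+1)) v - ip I (B (x k.+1)) v.
  by move=> v; rewrite hsa /E SSi ipC ipDl ipNl.
have hE1 := hE (x k.+1); have hE2 := hE (y k.+1); have hE3 := hE xs.
have hsy1 := ipS_sym hsa (x k.+1) (y k.+1).
have hsy2 := ipS_sym hsa (x k.+1) xs.
have hsy3 := ipS_sym hsa (y k.+1) xs.
have hu1 := congr1 (fun w => ip I w (y k.+1)) (hu k.+1).
have hu2 := congr1 (fun w => ip I w xs) (hu k.+1).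
simpl in hu1, hu2.
have h1 := hAm _ _ _ _ (hy k.+1) hxs.
rewrite -(pmulr_rge0 _ g0) -ipZl in h1.
rewrite !(scalerDr, scalerN, scalerA) (mulfV gnz) scale1r in h1.
have hB := mulr_ge0 (ltW g0) (hBm (y k.+1) xs).
have hC := ler_wpM2l (ltW g0) (hCc (x k.+1) xs).
set tc := normS I Sinv (C (x k.+1) - C xs) in hC.
have tc0 : 0 <= tc := nS_ge0 _ _ _.
have h4 : ip I (u k.+1) (y k.+1 - x k.+1) <= (L k * P) * s.
  apply: (csD hS hsa hpos SSi) (mulr_ge0 L0 P0) s0 _ (le_refl s).
  by rewrite hu; exact: hML k (y k) (x k).
have h5 : - ip I (u k.+2) E <= (L k.+1 * s) * (mu * s).
  apply: (csDn hS hsa hpos SSi SiS) (mulr_ge0 L10 s0) (mulr_ge0 hmu s0) _ _.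
    by rewrite hu; exact: hML k.+1 (y k.+1) (x k.+1).
  by rewrite /E (nS_Sinv I SSi); exact: hBL.
have h5' := ler_wpM2l (mulr_ge0 (ler0n _ 2) (ltW g0)) h5.
have h6 : ip I (B (y k.+1) - B (x k.+1)) E <= mu ^+ 2 * s ^+ 2.
  rewrite /E -(nSi2 hpos SSi).
  have := hBL (y k.+1) (x k.+1); rewrite -/s => hb.
  have := nS_ge0 I Sinv (B (y k.+1) - B (x k.+1)).
  nra.
have h6' := ler_wpM2l (sqr_ge0 (gam k.+1)) h6.
have h7 : - ip I (C (x k.+1) - C xs) (y k.+1 - x k.+1) <= tc * s.
  exact: (csDn hS hsa hpos SSi SiS) tc0 s0 (le_refl _) (le_refl _).
have h7' := ler_wpM2l (mulr_ge0 (ler0n _ 2) (ltW g0)) h7.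
have R1 := mulr_ge0 L0 (sqr_ge0 (P - s)).
have R2 := @young2 _ (gam k.+1) beta tc s g0 hbeta.
rewrite !(linD hS, linN hS, linZ hS, SSi) !(ipDl, ipDr, ipNl, ipNr, ipZl, ipZr).
rewrite !(linD hS, linN hS, linZ hS, SSi) !(ipDl, ipDr, ipNl, ipNr, ipZl, ipZr) in h1 hB hC h4 h5' h6' h7' hs hP2 hu1 hu2.
have XC : - 2 * gam k.+1 * (ip I (C (x k.+1)) (y k.+1) - ip I (C (x k.+1)) xs - ip I (C xs) (y k.+1) + ip I (C xs) xs) <= gam k.+1 * beta / 2 * s ^+ 2.
  lra.
have XU : 2 * (ip I (u k.+1) (y k.+1) - ip I (u k.+1) (x k.+1)) <= L k * P ^+ 2 + L k * s ^+ 2.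
  lra.
have X6 : gam k.+1 * (gam k.+1 * ip I (B (y k.+1)) E - gam k.+1 * ip I (B (x k.+1)) E) <= gam k.+1 ^+ 2 * mu ^+ 2 * s ^+ 2.
  lra.
rewrite hE2 hE3.
lra.
Qed.
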